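(* Let $K,M$ be symmetric homogeneous stable means and $N$ a symmetric homogeneous mean, all three having symmetric asymptotic expansions with coefficients $(a^K_n),(a^M_n),(a^N_n)$. If $N$ is simultaneously $(K,M)$-stabilizable and $(M,K)$-stabilizable, then $a^K_n=a^M_n$ for all $n\in\mathbb N_0$ and $a^N_1=a^M_1=a^K_1$; moreover $a^N_2=\frac16a^N_1(1+a^N_1)(1-4a^N_1)$.
   Context: A bi-variate mean is $M:(0,\infty)^2\to(0,\infty)$ with $\min\le M\le\max$; symmetric and homogeneous (degree 1). $M$ is stable if $M(s,t)=M\big(M(s,M(s,t)),M(M(s,t),t)\big)$. For stable means $K,M$, $N$ is $(K,M)$-stabilizable if $N(s,t)=K\big(N(s,M(s,t)),N(M(s,t),t)\big)$ for all $s,t>0$. A mean has a symmetric asymptotic expansion with coefficients $(a_n)$ if for every fixed real $t$ and $N\ge0$, $M(x-t,x+t)=\sum_{n=0}^Na_nt^{2n}x^{-2n+1}+o(x^{-2N+1})$ as $x\to\infty$. *)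

(* Defs.v *)
From Stdlib Require Import Reals Lra.
Open Scope R_scope.

(* A bivariate mean on (0,oo)^2; values outside (0,oo)^2 are irrelevant. *)
Definition is_mean (M : R -> R -> R) : Prop :=
  forall s t, 0 < s -> 0 < t -> Rmin s t <= M s t /\ M s t <= Rmax s t.

Definition symmetric (M : R -> R -> R) : Prop :=
  forall s t, 0 < s -> 0 < t -> M s t = M t s.

Definition homogeneous (M : R -> R -> R) : Prop :=
  forall l s t, 0 < l -> 0 < s -> 0 < t -> M (l * s) (l * t) = l * M s t.

Definition stable (M : R -> R -> R) : Prop :=
  forall s t, 0 < s -> 0 < t -> M s t = M (M s (M s t)) (M (M s t) t).

Definition stabilizable (K M N : R -> R -> R) : Prop :=
  forall s t, 0 < s -> 0 < t -> N s t = K (N s (M s t)) (N (M s t) t).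

(* M(x-t,x+t) = sum_{n=0}^{N} a_n t^{2n} x^{-2n+1} + o(x^{-2N+1}) as x -> oo,
   for every fixed real t and every N; here x^{-2n+1} = x / x^(2n). *)
Definition has_sym_asymp_exp (M : R -> R -> R) (a : nat -> R) : Prop :=
  forall (t : R) (N : nat) (eps : R), 0 < eps ->
    exists X : R, forall x : R, X < x -> Rabs t < x ->
      Rabs (M (x - t) (x + t)
            - sum_f_R0 (fun n => a n * t ^ (2 * n) * (x / x ^ (2 * n))) N)
      <= eps * (x / x ^ (2 * N)).

(* Main.v *)
Require Import Defs.
From Stdlib Require Import Reals Lra Lia List Arith.
Open Scope R_scope.
Import ListNotations.


Definition ev (P : R -> Prop) := exists d, 0 < d /\ forall u, 0 < u < d -> P u.
Definition lo (k:nat) (f:R->R) := forall eps, 0<eps -> ev (fun u => Rabs (f u) <= eps * u^k).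
Definition bo (k:nat) (f:R->R) := exists C, 0 <= C /\ ev (fun u => Rabs (f u) <= C * u^k).

Lemma ev_and P Q : ev P -> ev Q -> ev (fun u => P u /\ Q u).
Proof.
  intros [d1 [H1 P1]] [d2 [H2 P2]]. exists (Rmin d1 d2). split.
  apply Rmin_glb_lt; auto.
  intros u Hu. pose proof (Rmin_l d1 d2). pose proof (Rmin_r d1 d2).
  split; [apply P1|apply P2]; lra.
Qed.

Lemma ev_imp (P Q : R -> Prop) : ev P -> (forall u, 0 < u -> P u -> Q u) -> ev Q.
Proof. intros [d [H1 H2]] H. exists d; split; auto. intros u Hu; apply H; [lra|auto]. Qed.

Lemma ev_lt d : 0 < d -> ev (fun u => u < d).
Proof. intros. exists d; split; auto. intros; lra. Qed.

Lemma lo_ev k f g : ev (fun u => f u = g u) -> lo k g -> lo k f.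
Proof.
  intros He Hg eps Heps. eapply ev_imp. apply ev_and. apply He. apply (Hg eps Heps).
  simpl. intros u _ [E H]. rewrite E; auto.
Qed.

Lemma bo_ev k f g : ev (fun u => f u = g u) -> bo k g -> bo k f.
Proof.
  intros He [C [HC Hg]]. exists C; split; auto. eapply ev_imp. apply ev_and. apply He. apply Hg.
  simpl. intros u _ [E H]. rewrite E; auto.
Qed.

Lemma lo_ext k f g : (forall u, f u = g u) -> lo k g -> lo k f.
Proof. intros H; apply lo_ev. exists 1; split; [lra|auto]. Qed.
Lemma bo_ext k f g : (forall u, f u = g u) -> bo k g -> bo k f.
Proof. intros H; apply bo_ev. exists 1; split; [lra|auto]. Qed.

Lemma pow_le_one_mono u j i : 0 <= u <= 1 -> u^(j+i) <= u^j.
Proof.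
  intros Hu. rewrite pow_add.
  assert (0 <= u^j) by (apply pow_le; lra).
  assert (u^i <= 1).
  { replace 1 with (1^i) by apply pow1. apply pow_incr; lra. }
  assert (0 <= u^i) by (apply pow_le; lra). nra.
Qed.

Lemma lo_bo k f : lo k f -> bo k f.
Proof. intros H. exists 1; split; [lra|]. apply H; lra. Qed.

Lemma bo_weak k j f : (j <= k)%nat -> bo k f -> bo j f.
Proof.
  intros Hjk [C [HC H]]. exists C; split; auto. eapply ev_imp. apply ev_and. apply H. apply (ev_lt 1); lra.
  simpl. intros u Hu [H1 H2]. replace k with (j + (k-j))%nat in H1 by lia.
  pose proof (pow_le_one_mono u j (k-j)). nra.
Qed.

Lemma lo_weak k j f : (j <= k)%nat -> lo k f -> lo j f.
Proof.
  intros Hjk H eps Heps. eapply ev_imp. apply ev_and. apply (H eps Heps). apply (ev_lt 1); lra.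
  simpl. intros u Hu [H1 H2]. replace k with (j + (k-j))%nat in H1 by lia.
  pose proof (pow_le_one_mono u j (k-j)). nra.
Qed.

Lemma bo_lo k f : bo (S k) f -> lo k f.
Proof.
  intros [C [HC H]] eps Heps. eapply ev_imp. apply ev_and. apply H. apply (ev_lt (eps/(C+1))).
  apply Rdiv_lt_0_compat; lra.
  simpl. intros u Hu [H1 H2].
  assert (0 < u^k) by (apply pow_lt; lra).
  assert (C * u <= eps).
  { apply Rmult_lt_compat_l with (r:=C+1) in H2; [|lra].
    replace ((C+1)*(eps/(C+1))) with eps in H2 by (field; lra). nra. }
  nra.
Qed.

Lemma lo_add k f g : lo k f -> lo k g -> lo k (fun u => f u + g u).
Proof.
  intros Hf Hg eps Heps. eapply ev_imp. apply ev_and. apply (Hf (eps/2)). lra. apply (Hg (eps/2)). lra.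
  simpl. intros u Hu [H1 H2]. eapply Rle_trans. apply Rabs_triang. lra.
Qed.

Lemma bo_add k f g : bo k f -> bo k g -> bo k (fun u => f u + g u).
Proof.
  intros [C1 [HC1 Hf]] [C2 [HC2 Hg]]. exists (C1+C2); split; [lra|].
  eapply ev_imp. apply ev_and. apply Hf. apply Hg.
  simpl. intros u Hu [H1 H2]. eapply Rle_trans. apply Rabs_triang. lra.
Qed.

Lemma bo_mul i j f g : bo i f -> bo j g -> bo (i+j) (fun u => f u * g u).
Proof.
  intros [C1 [HC1 Hf]] [C2 [HC2 Hg]]. exists (C1*C2); split; [nra|].
  eapply ev_imp. apply ev_and. apply Hf. apply Hg.
  simpl. intros u Hu [H1 H2]. rewrite Rabs_mult, pow_add.
  pose proof (Rabs_pos (f u)). pose proof (Rabs_pos (g u)).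
  assert (0 < u^i) by (apply pow_lt; lra). assert (0 < u^j) by (apply pow_lt; lra).
  replace (C1*C2*(u^i*u^j)) with ((C1*u^i)*(C2*u^j)) by ring.
  apply Rmult_le_compat; auto.
Qed.

Lemma lo_mul i j f g : lo i f -> bo j g -> lo (i+j) (fun u => f u * g u).
Proof.
  intros Hf [C [HC Hg]] eps Heps.
  eapply ev_imp. apply ev_and. apply (Hf (eps/(C+1))). apply Rdiv_lt_0_compat; lra. apply Hg.
  simpl. intros u Hu [H1 H2]. rewrite Rabs_mult, pow_add.
  pose proof (Rabs_pos (f u)). pose proof (Rabs_pos (g u)).
  assert (0 < u^i) by (apply pow_lt; lra). assert (0 < u^j) by (apply pow_lt; lra).
  apply Rle_trans with ((eps/(C+1)*u^i)*(C*u^j)). apply Rmult_le_compat; auto.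
  assert (eps / (C+1) * C <= eps).
  { unfold Rdiv. replace (eps * / (C+1) * C) with (eps * (C/(C+1))) by (field; lra).
    assert (C/(C+1) <= 1). { apply Rmult_le_reg_r with (C+1). lra. unfold Rdiv. rewrite Rmult_assoc, Rinv_l; lra. }
    nra. }
  assert (0 < u^i*u^j) by nra. nra.
Qed.

Lemma lo_mul' i j f g : bo i f -> lo j g -> lo (i+j) (fun u => f u * g u).
Proof. intros. rewrite Nat.add_comm. apply (lo_ext _ _ (fun u => g u * f u)). intros; ring. apply lo_mul; eauto. Qed.

Lemma bo_const c : bo 0 (fun _ => c).
Proof. exists (Rabs c); split. apply Rabs_pos. exists 1; split; [lra|]. intros; simpl; lra. Qed.

Lemma bo_id : bo 1 (fun u => u).
Proof. exists 1; split; [lra|]. exists 1; split; [lra|]. intros; simpl. rewrite Rabs_right; lra. Qed.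

Lemma bo_zero k : bo k (fun _ => 0).
Proof. exists 0; split; [lra|]. exists 1; split; [lra|]. intros; rewrite Rabs_R0; lra. Qed.
Lemma lo_zero k : lo k (fun _ => 0).
Proof. intros eps He. exists 1; split; [lra|]. intros; rewrite Rabs_R0. assert (0 < u^k) by (apply pow_lt; lra). nra. Qed.

Lemma lo_scal k c f : lo k f -> lo k (fun u => c * f u).
Proof. intros H. replace k with (0+k)%nat by lia. apply lo_mul'; auto. apply bo_const. Qed.
Lemma bo_scal k c f : bo k f -> bo k (fun u => c * f u).
Proof. intros H. replace k with (0+k)%nat by lia. apply bo_mul; auto. apply bo_const. Qed.

Lemma lo_sub k f g : lo k f -> lo k g -> lo k (fun u => f u - g u).
Proof. intros. apply (lo_ext k _ (fun u => f u + (-1) * g u)). intros; ring. apply lo_add; [eauto| apply (lo_scal _ (-1)); eauto]. Qed.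
Lemma bo_sub k f g : bo k f -> bo k g -> bo k (fun u => f u - g u).
Proof. intros. apply (bo_ext k _ (fun u => f u + (-1) * g u)). intros; ring. apply bo_add; [eauto| apply (bo_scal _ (-1)); eauto]. Qed.

Lemma bo_pow j f m : bo j f -> bo (m*j) (fun u => f u ^ m).
Proof.
  intros H. induction m. simpl. apply bo_const.
  replace (S m * j)%nat with (j + m*j)%nat by lia. apply (bo_ext _ _ (fun u => f u * f u ^ m)).
  intros; simpl; ring. apply bo_mul; eauto.
Qed.

Lemma bo_upow k : bo k (fun u => u^k).
Proof. exists 1; split; [lra|]. exists 1; split; [lra|]. intros. rewrite Rabs_right. lra. apply Rle_ge, pow_le; lra. Qed.

Lemma bo_le k f g : ev (fun u => Rabs (f u) <= g u) -> bo k g -> bo k f.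
Proof.
  intros He [C [HC Hg]]. exists C; split; auto. eapply ev_imp. apply ev_and. apply He. apply Hg.
  simpl. intros u _ [E H]. eapply Rle_trans. apply E. eapply Rle_trans. apply Rle_abs. auto.
Qed.

Lemma lo_coef k c : lo k (fun u => c * u^k) -> c = 0.
Proof.
  intros H. destruct (Req_dec c 0); auto. exfalso.
  destruct (H (Rabs c / 2)) as [d [Hd Hu]]. apply Rdiv_lt_0_compat; [apply Rabs_pos_lt; auto|lra].
  specialize (Hu (d/2) ltac:(lra)). rewrite Rabs_mult, (Rabs_right ((d/2)^k)) in Hu.
  assert (0 < (d/2)^k) by (apply pow_lt; lra). pose proof (Rabs_pos_lt c H0). nra.
  apply Rle_ge, pow_le; lra.
Qed.

Lemma ev_away f c : lo 0 (fun u => f u - c) -> c <> 0 -> ev (fun u => Rabs c / 2 <= Rabs (f u)).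
Proof.
  intros H Hc. pose proof (Rabs_pos_lt c Hc).
  eapply ev_imp. apply (H (Rabs c/2)). lra. simpl. intros u _ Hu.
  rewrite Rmult_1_r in Hu. pose proof (Rabs_triang_inv c (c - f u)).
  replace (c - (c - f u)) with (f u) in H1 by ring. rewrite Rabs_minus_sym in Hu. lra.
Qed.

Lemma bo_inv f c : lo 0 (fun u => f u - c) -> c <> 0 -> bo 0 (fun u => / f u).
Proof.
  intros H Hc. pose proof (Rabs_pos_lt c Hc). exists (2 / Rabs c). split. apply Rlt_le, Rdiv_lt_0_compat; lra.
  eapply ev_imp. apply ev_away; eauto. simpl. intros u _ Hu. rewrite Rmult_1_r.
  assert (f u <> 0). { intro E; rewrite E, Rabs_R0 in Hu; lra. }
  rewrite Rabs_inv. apply Rmult_le_reg_l with (Rabs (f u)). apply Rabs_pos_lt; auto.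
  rewrite Rinv_r. 2: apply Rabs_no_R0; auto.
  unfold Rdiv. apply Rmult_le_reg_l with (Rabs c); [lra|].
  replace (Rabs c * (Rabs (f u) * (2 * / Rabs c))) with (2 * Rabs (f u)) by (field; lra). lra.
Qed.

Lemma ev_ne f c : lo 0 (fun u => f u - c) -> c <> 0 -> ev (fun u => f u <> 0).
Proof.
  intros H Hc. pose proof (Rabs_pos_lt c Hc). eapply ev_imp. apply ev_away; eauto.
  simpl; intros u _ Hu E. rewrite E, Rabs_R0 in Hu; lra.
Qed.

Definition FP (P : R->R->R) v := P (1-v) (1+v).
Definition Sm (a:nat->R) n v := sum_f_R0 (fun j => a j * v^(2*j)) n.
Definition EXPF (F:R->R) (a:nat->R) := forall n eps, 0<eps -> exists d, 0<d /\
  forall v, Rabs v < d -> Rabs (F v - Sm a n v) <= eps * Rabs v ^ (2*n).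
Definition H (F:R->R) s t := (s+t)/2 * F ((t-s)/(s+t)).

Lemma mean_pos P s t : is_mean P -> 0 < s -> 0 < t -> 0 < P s t.
Proof. intros Hm Hs Ht. destruct (Hm s t Hs Ht). pose proof (Rmin_glb_lt s t 0). unfold Rmin in *. destruct (Rle_dec s t); lra. Qed.

Lemma a0_one P a : is_mean P -> has_sym_asymp_exp P a -> a 0%nat = 1.
Proof.
  intros Hm Ha. destruct (Req_dec (a 0%nat) 1) as [|Hne]; auto. exfalso.
  set (e := Rabs (a 0%nat - 1)). assert (He : 0 < e) by (apply Rabs_pos_lt; lra).
  destruct (Ha 1 0%nat (e/2) ltac:(lra)) as [X HX].
  set (x := Rabs X + 1 + 4/e).
  assert (0 < 4/e) by (apply Rdiv_lt_0_compat; lra). pose proof (Rabs_pos X). pose proof (Rle_abs X).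
  specialize (HX x ltac:(unfold x; lra) ltac:(rewrite Rabs_R1; unfold x; lra)).
  simpl in HX. replace (x / 1) with x in HX by field.
  destruct (Hm (x-1) (x+1) ltac:(unfold x; lra) ltac:(unfold x; lra)) as [Hm1 Hm2].
  rewrite Rmin_left in Hm1 by lra. rewrite Rmax_right in Hm2 by lra.
  set (p := P (x-1) (x+1)) in *.
  assert (Hx : e * x <= e/2*x + 1).
  { unfold e. rewrite <- (Rabs_right x) by (unfold x; lra). rewrite <- Rabs_mult.
    replace ((a 0%nat - 1) * x) with (- (p - a 0%nat * 1 * x) + (p - x)) by ring.
    eapply Rle_trans. apply Rabs_triang. rewrite Rabs_Ropp.
    rewrite (Rabs_right x) by (unfold x; lra).
    assert (Rabs (p - x) <= 1) by (apply Rabs_le; lra).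
    change (Rabs (a 0%nat - 1)) with e. lra. }
  assert (e * (4/e) = 4) by (field; lra).
  assert (e * x > 4). { unfold x. nra. }
  lra.
Qed.

Lemma hom_H P s t : homogeneous P -> 0 < s -> 0 < t -> P s t = H (FP P) s t.
Proof.
  intros Hh Hs Ht. unfold H, FP. set (l := (s+t)/2). set (v := (t-s)/(s+t)).
  assert (0 < 1 - v) by (unfold v; apply Rlt_0_minus; apply (Rmult_lt_reg_r (s+t)); [lra|]; unfold Rdiv; rewrite Rmult_assoc, Rinv_l; lra).
  assert (0 < 1 + v).
  { unfold v. replace (1 + (t-s)/(s+t)) with (2*t/(s+t)) by (field; lra). apply Rdiv_lt_0_compat; lra. }
  rewrite <- Hh by (unfold l; lra). f_equal; unfold l, v; field; lra.
Qed.

Lemma Sm_0 a n : Sm a n 0 = a 0%nat.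
Proof.
  unfold Sm. induction n. simpl. ring. rewrite tech5, IHn.
  replace (2 * S n)%nat with (S (2*n+1)) by lia. simpl. ring.
Qed.

Lemma Sm_opp a n v : Sm a n (-v) = Sm a n v.
Proof.
  unfold Sm. apply sum_eq. intros j _. rewrite !pow_mult. f_equal. f_equal. ring.
Qed.

Lemma sum_scal_inv a n v : v <> 0 ->
  v * sum_f_R0 (fun j => a j * 1 ^ (2 * j) * (/v / (/v) ^ (2 * j))) n = Sm a n v.
Proof.
  intros Hv. unfold Sm. induction n.
  - simpl. field. auto.
  - rewrite !tech5, Rmult_plus_distr_l, IHn. f_equal. rewrite pow1, pow_inv. field. split; auto. apply pow_nonzero; auto.
Qed.

Lemma EXPF_of P a : is_mean P -> symmetric P -> homogeneous P -> has_sym_asymp_exp P a -> EXPF (FP P) a.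
Proof.
  intros Hm Hs Hh Ha. pose proof (a0_one P a Hm Ha) as A0.
  intros n eps Heps. destruct (Ha 1 n eps Heps) as [X HX].
  pose proof (Rabs_pos X). pose proof (Rle_abs X).
  exists (/ (Rabs X + 2)). split. apply Rinv_0_lt_compat; lra.
  assert (Hpos : forall v, 0 < v < / (Rabs X + 2) -> Rabs (FP P v - Sm a n v) <= eps * Rabs v ^ (2*n)).
  { intros v [Hv1 Hv2].
    assert (Hx : Rabs X + 2 < / v).
    { apply Rmult_lt_reg_l with v; auto. rewrite Rinv_r by lra.
      apply Rmult_lt_compat_r with (r := Rabs X + 2) in Hv2; [|lra].
      rewrite Rinv_l in Hv2 by lra. lra. }
    specialize (HX (/v) ltac:(lra) ltac:(rewrite Rabs_R1; lra)).
    assert (E : FP P v = v * P (/v - 1) (/v + 1)).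
    { unfold FP. replace (/v - 1) with (/v * (1 - v)) by (field; lra).
      replace (/v + 1) with (/v * (1 + v)) by (field; lra).
      assert (v < 1).
      { apply Rlt_trans with (/(Rabs X + 2)); auto. rewrite <- Rinv_1. apply Rinv_lt_contravar; lra. }
      rewrite (Hh (/v) (1-v) (1+v)); [field; lra | apply Rinv_0_lt_compat; lra | lra | lra]. }
    rewrite E, <- (sum_scal_inv a n v) by lra.
    rewrite <- Rmult_minus_distr_l, Rabs_mult, (Rabs_right v) by lra.
    replace (v ^ (2*n)) with (v * (/v / (/v)^(2*n))).
    2:{ rewrite pow_inv. field. split; [apply pow_nonzero|]; lra. }
    replace (eps * (v * (/ v / (/ v) ^ (2 * n)))) with (v * (eps * (/ v / (/ v) ^ (2 * n)))) by ring.
    apply Rmult_le_compat_l; lra. }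
  assert (/(Rabs X + 2) < 1) by (rewrite <- Rinv_1; apply Rinv_lt_contravar; lra).
  intros v Hv. destruct (Rtotal_order v 0) as [Hn|[Hz|Hp]].
  - rewrite Rabs_left in Hv by lra.
    assert (E : FP P v = FP P (-v)).
    { unfold FP. rewrite Hs by lra. f_equal; ring. }
    rewrite E, <- (Sm_opp a n v), <- (Rabs_Ropp v). apply Hpos. lra.
  - subst. rewrite Sm_0, A0. unfold FP. destruct (Hm (1-0) (1+0)) as [Hq1 Hq2]; try lra.
    rewrite Rmin_left in Hq1 by lra. rewrite Rmax_left in Hq2 by lra.
    replace (P (1-0) (1+0) - 1) with 0 by lra. rewrite Rabs_R0.
    apply Rmult_le_pos; [lra|apply pow_le; lra].
  - rewrite Rabs_right in Hv by lra. apply Hpos; lra.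
Qed.

Lemma stab_of K M N : is_mean M -> is_mean N -> homogeneous K -> homogeneous N ->
  stabilizable K M N -> forall u, 0 < u < 1 ->
  FP N u = H (FP K) (H (FP N) (1-u) (FP M u)) (H (FP N) (FP M u) (1+u)).
Proof.
  intros HmM HmN HhK HhN Hst u Hu. unfold FP at 1. rewrite Hst by lra.
  assert (0 < M (1-u) (1+u)) by (apply mean_pos; auto; lra).
  fold (FP M u) in *.
  assert (0 < N (1-u) (FP M u)) by (apply mean_pos; auto; lra).
  assert (0 < N (FP M u) (1+u)) by (apply mean_pos; auto; lra).
  rewrite hom_H by auto. rewrite (hom_H N (1-u)) by (auto; lra). rewrite (hom_H N (FP M u) (1+u)) by (auto; lra).
  reflexivity.
Qed.

Lemma EXPF_comp F a n r : EXPF F a -> bo 1 r -> lo (2*n) (fun u => F (r u) - Sm a n (r u)).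
Proof.
  intros HF [C [HC Hr]] eps Heps.
  assert (HC2 : 0 <= C^(2*n)) by (apply pow_le; lra).
  destruct (HF n (eps/(C^(2*n)+1))) as [d [Hd Hb]]. apply Rdiv_lt_0_compat; lra.
  eapply ev_imp. apply ev_and. apply Hr. apply (ev_lt (d/(C+1))). apply Rdiv_lt_0_compat; lra.
  cbv beta. intros u Hu [H1 H2]. replace (C * u^1) with (C*u) in H1 by ring.
  assert (C * u < d).
  { apply Rmult_lt_compat_l with (r:=C+1) in H2; [|lra].
    replace ((C+1)*(d/(C+1))) with d in H2 by (field; lra). nra. }
  eapply Rle_trans. apply Hb. eapply Rle_lt_trans; eauto.
  apply Rle_trans with (eps / (C ^ (2 * n) + 1) * (C*u)^(2*n)).
  apply Rmult_le_compat_l. apply Rlt_le, Rdiv_lt_0_compat; lra. apply pow_incr. split; [apply Rabs_pos|auto].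
  rewrite Rpow_mult_distr.
  assert (0 < u^(2*n)) by (apply pow_lt; lra).
  replace (eps / (C ^ (2 * n) + 1) * (C ^ (2 * n) * u ^ (2 * n))) with (eps * u^(2*n) * (C^(2*n)/(C^(2*n)+1))) by (field; lra).
  assert (C^(2*n)/(C^(2*n)+1) <= 1).
  { apply Rmult_le_reg_r with (C^(2*n)+1). lra. unfold Rdiv. rewrite Rmult_assoc, Rinv_l; lra. }
  assert (0 < eps * u^(2*n)) by nra. nra.
Qed.

Lemma bo_abs k f : bo k f -> bo k (fun u => Rabs (f u)).
Proof. intros [C [HC H]]. exists C; split; auto. eapply ev_imp. apply H. intros. rewrite Rabs_Rabsolu; auto. Qed.

Lemma F1 F a r : EXPF F a -> a 0%nat = 1 -> bo 1 r -> bo 2 (fun u => F (r u) - 1).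
Proof.
  intros HF A0 Hr. pose proof (EXPF_comp F a 1 r HF Hr) as E. apply lo_bo in E.
  apply (bo_ext _ _ (fun u => (F (r u) - Sm a 1 (r u)) + a 1%nat * r u ^ 2)).
  intros u. unfold Sm. simpl. rewrite A0. ring.
  apply bo_add. exact E. apply bo_scal. apply (bo_pow 1 r 2 Hr).
Qed.

Lemma F0 F a r : EXPF F a -> a 0%nat = 1 -> bo 1 r -> lo 0 (fun u => F (r u) - 1).
Proof. intros. apply bo_lo. apply (bo_weak 2). lia. eapply F1; eauto. Qed.

Lemma bo_lo0 k f : bo (S k) f -> lo 0 f.
Proof. intros. apply (lo_weak k). lia. apply bo_lo; auto. Qed.

Lemma PD x y : bo 1 x -> bo 1 y -> bo 2 (fun u => x u - y u) ->
  forall p, bo (S (S p)) (fun u => x u ^ S p - y u ^ S p).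
Proof.
  intros Hx Hy Hd. induction p.
  - apply (bo_ext _ _ (fun u => x u - y u)); auto. intros; simpl; ring.
  - apply (bo_ext _ _ (fun u => x u * (x u ^ S p - y u ^ S p) + y u ^ S p * (x u - y u))).
    intros; simpl; ring.
    apply bo_add. replace (S (S (S p))) with (1 + S (S p))%nat by lia. apply bo_mul; auto.
    apply (bo_weak (S p * 1 + 2)). lia. apply bo_mul; auto. apply bo_pow; auto.
Qed.

Lemma Lip x y m : Rabs x <= 1 -> Rabs y <= 1 -> Rabs (x^m - y^m) <= INR m * Rabs (x - y).
Proof.
  intros Hx Hy. induction m.
  - simpl. replace (1-1) with 0 by ring. rewrite Rabs_R0; lra.
  - replace (x ^ S m - y ^ S m) with (x * (x^m - y^m) + y^m * (x - y)) by (simpl; ring).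
    eapply Rle_trans. apply Rabs_triang. rewrite !Rabs_mult, S_INR.
    assert (Rabs (y^m) <= 1). { rewrite <- RPow_abs. replace 1 with (1^m) by apply pow1. apply pow_incr. split; [apply Rabs_pos|auto]. }
    pose proof (Rabs_pos x). pose proof (Rabs_pos (x^m - y^m)). pose proof (Rabs_pos (x - y)).
    pose proof (Rabs_pos (y^m)). nra.
Qed.

Lemma PL a n : exists C, 0 <= C /\ forall x y, Rabs x <= 1 -> Rabs y <= 1 ->
  Rabs (Sm a n x - Sm a n y) <= C * ((Rabs x + Rabs y) * Rabs (x - y)).
Proof.
  induction n.
  - exists 0. split; [lra|]. intros. unfold Sm. simpl. replace (a 0%nat * 1 - a 0%nat * 1) with 0 by ring.
    rewrite Rabs_R0. lra.
  - destruct IHn as [C [HC HH]]. exists (C + Rabs (a (S n)) * INR (S n)). split.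
    pose proof (Rabs_pos (a (S n))). pose proof (pos_INR (S n)). nra.
    intros x y Hx Hy. unfold Sm. rewrite !tech5. fold (Sm a n x). fold (Sm a n y).
    replace (Sm a n x + a (S n) * x ^ (2 * S n) - (Sm a n y + a (S n) * y ^ (2 * S n)))
      with ((Sm a n x - Sm a n y) + a (S n) * ((x^2)^(S n) - (y^2)^(S n))) by (rewrite !pow_mult; ring).
    eapply Rle_trans. apply Rabs_triang. rewrite Rabs_mult.
    assert (Hx2 : Rabs (x^2) <= 1). { rewrite <- RPow_abs. replace 1 with (1^2) by ring. apply pow_incr. split; [apply Rabs_pos|auto]. }
    assert (Hy2 : Rabs (y^2) <= 1). { rewrite <- RPow_abs. replace 1 with (1^2) by ring. apply pow_incr. split; [apply Rabs_pos|auto]. }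
    pose proof (Lip (x^2) (y^2) (S n) Hx2 Hy2) as HL.
    assert (Rabs (x^2 - y^2) <= (Rabs x + Rabs y) * Rabs (x - y)).
    { replace (x^2 - y^2) with ((x+y)*(x-y)) by ring. rewrite Rabs_mult. apply Rmult_le_compat_r. apply Rabs_pos. apply Rabs_triang. }
    pose proof (HH x y Hx Hy). pose proof (Rabs_pos (a (S n))). pose proof (pos_INR (S n)).
    pose proof (Rabs_pos (x^2 - y^2)).
    assert (0 <= (Rabs x + Rabs y) * Rabs (x - y)).
    { apply Rmult_le_pos. pose proof (Rabs_pos x); pose proof (Rabs_pos y); lra. apply Rabs_pos. }
    assert (Rabs (a (S n)) * Rabs ((x ^ 2) ^ S n - (y ^ 2) ^ S n) <= Rabs (a (S n)) * (INR (S n) * ((Rabs x + Rabs y) * Rabs (x - y)))).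
    { apply Rmult_le_compat_l; auto. eapply Rle_trans. apply HL. apply Rmult_le_compat_l; auto. }
    nra.
Qed.

Lemma GD aK aM n v : (forall j, (j < n)%nat -> aK j = aM j) ->
  Sm aK n v - Sm aM n v = (aK n - aM n) * v^(2*n).
Proof.
  intros IH. destruct n.
  - unfold Sm. simpl. ring.
  - unfold Sm. rewrite !tech5.
    assert (Hs : sum_f_R0 (fun j => aK j * v ^ (2 * j)) n = sum_f_R0 (fun j => aM j * v ^ (2 * j)) n).
    { apply sum_eq. intros i Hi. rewrite IH by lia. auto. }
    rewrite Hs. ring.
Qed.

Lemma bo0_of_lo0 f c : lo 0 (fun u => f u - c) -> bo 0 f.
Proof. intros H. apply (bo_ext _ _ (fun u => (f u - c) + c)). intros; ring.
  apply bo_add. apply lo_bo; auto. apply bo_const. Qed.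

Lemma ev_abs1 r : bo 1 r -> ev (fun u => Rabs (r u) <= 1).
Proof. intros Hr. eapply ev_imp. apply (bo_lo 0 r Hr 1). lra. intros u _ Hu. simpl in Hu. lra. Qed.

Lemma DL F a n s t s' t' : EXPF F a -> a 0%nat = 1 ->
  lo 0 (fun u => s u + t u - 2) -> lo 0 (fun u => s' u + t' u - 2) ->
  bo 1 (fun u => t u - s u) -> bo 1 (fun u => t' u - s' u) ->
  bo (2*n) (fun u => s u - s' u) -> bo (2*n) (fun u => t u - t' u) ->
  lo (2*n) (fun u => H F (s u) (t u) - H F (s' u) (t' u) - ((s u - s' u) + (t u - t' u))/2).
Proof.
  intros HF A0 Hc Hc' Hd Hd' Hs Ht.
  assert (Hne : ev (fun u => s u + t u <> 0)) by (apply (ev_ne _ 2); [exact Hc|lra]).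
  assert (Hne' : ev (fun u => s' u + t' u <> 0)) by (apply (ev_ne _ 2); [exact Hc'|lra]).
  assert (Hi : bo 0 (fun u => / (s u + t u))) by (apply (bo_inv _ 2); [exact Hc|lra]).
  assert (Hi' : bo 0 (fun u => / (s' u + t' u))) by (apply (bo_inv _ 2); [exact Hc'|lra]).
  assert (Hb' : bo 0 (fun u => s' u + t' u)) by (apply (bo0_of_lo0 _ 2); exact Hc').
  set (r := fun u => (t u - s u) / (s u + t u)).
  set (r' := fun u => (t' u - s' u) / (s' u + t' u)).
  assert (Hr : bo 1 r) by (apply (bo_mul 1 0 (fun u => t u - s u) (fun u => / (s u + t u))); auto).
  assert (Hr' : bo 1 r') by (apply (bo_mul 1 0 (fun u => t' u - s' u) (fun u => / (s' u + t' u))); auto).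
  assert (Hrr : bo (2*n) (fun u => r u - r' u)).
  { apply (bo_ev _ _ (fun u => ((((t u - t' u) - (s u - s' u)) * (s' u + t' u) - (t' u - s' u) * ((s u - s' u) + (t u - t' u))) * / (s u + t u)) * / (s' u + t' u))).
    eapply ev_imp. apply ev_and. apply Hne. apply Hne'. intros u _ [N1 N2]. unfold r, r'. field; auto.
    replace (2*n)%nat with (2*n+0+0)%nat at 1 by lia. apply bo_mul; auto. apply bo_mul; auto.
    apply bo_sub. replace (2*n)%nat with (2*n+0)%nat at 1 by lia. apply bo_mul; auto. apply bo_sub; auto.
    apply (bo_weak (1 + 2*n)). lia. apply bo_mul; auto. apply bo_add; auto. }
  destruct (PL a n) as [C [HC HPL]].
  assert (HS : lo (2*n) (fun u => Sm a n (r u) - Sm a n (r' u))).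
  { apply bo_lo. apply (bo_le _ _ (fun u => C * ((Rabs (r u) + Rabs (r' u)) * Rabs (r u - r' u)))).
    eapply ev_imp. apply ev_and. apply (ev_abs1 _ Hr). apply (ev_abs1 _ Hr'). intros u _ [E1 E2]. apply HPL; auto.
    replace (S (2*n)) with (1 + 2*n)%nat by lia. apply bo_scal.
    apply bo_mul. apply bo_add; apply bo_abs; auto. apply (bo_abs _ (fun u => r u - r' u)); auto. }
  pose proof (EXPF_comp F a n r HF Hr) as E1. pose proof (EXPF_comp F a n r' HF Hr') as E2.
  pose proof (F0 F a r HF A0 Hr) as E3.
  apply (lo_ext _ _ (fun u => ((s u - s' u) + (t u - t' u))/2 * (F (r u) - 1) + (s' u + t' u)/2 * ((Sm a n (r u) - Sm a n (r' u)) + (F (r u) - Sm a n (r u)) - (F (r' u) - Sm a n (r' u))))).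
  intros u. unfold H, r, r'. field.
  apply lo_add.
  - replace (2*n)%nat with (2*n+0)%nat at 1 by lia. apply lo_mul'; auto.
    apply (bo_ext _ _ (fun u => / 2 * ((s u - s' u) + (t u - t' u)))). intros; field. apply bo_scal, bo_add; auto.
  - replace (2*n)%nat with (0+2*n)%nat at 1 by lia. apply lo_mul'.
    apply (bo_ext _ _ (fun u => / 2 * (s' u + t' u))). intros; field. apply bo_scal; auto.
    apply lo_sub; [apply lo_add|]; auto.
Qed.

Lemma MD FK FM aK aM n A B : EXPF FK aK -> EXPF FM aM -> (forall j, (j<n)%nat -> aK j = aM j) -> (1 <= n)%nat ->
  lo 0 (fun u => A u + B u - 2) -> bo 2 (fun u => (B u - A u)/(A u + B u) - u/2) ->
  lo (2*n) (fun u => H FK (A u) (B u) - H FM (A u) (B u) - (aK n - aM n) * (u/2)^(2*n)).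
Proof.
  intros HK HM IH Hn Hc Hr2.
  set (r := fun u => (B u - A u)/(A u + B u)).
  assert (Hh : bo 1 (fun u => u/2)) by (apply (bo_ext _ _ (fun u => /2 * u)); [intros; field| apply bo_scal, bo_id]).
  assert (Hr : bo 1 r).
  { apply (bo_ext _ _ (fun u => (r u - u/2) + u/2)). intros; ring. apply bo_add; auto. apply (bo_weak 2); [lia|auto]. }
  pose proof (EXPF_comp FK aK n r HK Hr) as EK. pose proof (EXPF_comp FM aM n r HM Hr) as EM.
  assert (HY : forall u, FK (r u) - FM (r u) = (FK (r u) - Sm aK n (r u)) - (FM (r u) - Sm aM n (r u)) + (aK n - aM n) * r u ^ (2*n)).
  { intros u. rewrite <- GD by auto. ring. }
  assert (HP : lo (2*n) (fun u => r u ^ (2*n) - (u/2)^(2*n))).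
  { replace (2*n)%nat with (S (2*n-1)) by lia. apply bo_lo. apply PD; auto. }
  assert (HYb : bo (2*n) (fun u => FK (r u) - FM (r u))).
  { apply (bo_ext _ _ _ HY). apply bo_add. apply bo_sub; apply lo_bo; auto. apply bo_scal.
    replace (2*n)%nat with (2*n*1)%nat at 1 by lia. apply bo_pow; auto. }
  apply (lo_ext _ _ (fun u => ((A u + B u)/2 - 1) * (FK (r u) - FM (r u)) + ((FK (r u) - Sm aK n (r u)) - (FM (r u) - Sm aM n (r u)) + (aK n - aM n) * (r u ^ (2*n) - (u/2)^(2*n))))).
  { intros u. cbv beta. unfold H, r. set (rho := (B u - A u)/(A u + B u)).
    assert (G : Sm aK n rho = Sm aM n rho + (aK n - aM n) * rho^(2*n)) by (pose proof (GD aK aM n rho IH); lra).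
    rewrite G. ring. }
  apply lo_add.
  - replace (2*n)%nat with (0 + 2*n)%nat at 1 by lia. apply lo_mul; auto.
    apply (lo_ext _ _ (fun u => /2 * (A u + B u - 2))). intros; field. apply lo_scal; auto.
  - apply lo_add. apply lo_sub; auto. apply lo_scal; auto.
Qed.

Lemma STR F a mm : EXPF F a -> a 0%nat = 1 -> bo 2 (fun u => mm u - 1) ->
  bo 2 (fun u => H F (1-u) (mm u) - (1 - u/2)) /\ bo 2 (fun u => H F (mm u) (1+u) - (1 + u/2)).
Proof.
  intros HF A0 Hm.
  assert (Hm1 : bo 1 (fun u => mm u - 1)) by (apply (bo_weak 2); [lia|auto]).
  split.
  - assert (Hc : lo 0 (fun u => (1-u) + mm u - 2)).
    { apply bo_lo. apply (bo_ext _ _ (fun u => (mm u - 1) + (-1) * u)). intros; ring. apply bo_add; auto. apply bo_scal, bo_id. }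
    assert (Hi : bo 0 (fun u => / ((1-u) + mm u))) by (apply (bo_inv _ 2); [exact Hc|lra]).
    assert (Hr : bo 1 (fun u => (mm u - (1-u)) / ((1-u) + mm u))).
    { apply (bo_mul 1 0 (fun u => mm u - (1-u))); auto. apply (bo_ext _ _ (fun u => (mm u - 1) + u)). intros; ring. apply bo_add; auto. apply bo_id. }
    pose proof (F1 F a _ HF A0 Hr) as E.
    apply (bo_ext _ _ (fun u => ((1-u) + mm u)/2 * (F ((mm u - (1-u)) / ((1-u) + mm u)) - 1) + /2 * (mm u - 1))).
    intros u; unfold H; field.
    apply bo_add. apply (bo_mul 0 2); auto. apply (bo_ext _ _ (fun u => /2 * (((1-u) + mm u - 2) + 2))). intros; field.
    apply bo_scal. apply bo_add. apply lo_bo; auto. apply bo_const. apply bo_scal; auto.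
  - assert (Hc : lo 0 (fun u => mm u + (1+u) - 2)).
    { apply bo_lo. apply (bo_ext _ _ (fun u => (mm u - 1) + u)). intros; ring. apply bo_add; auto. apply bo_id. }
    assert (Hi : bo 0 (fun u => / (mm u + (1+u)))) by (apply (bo_inv _ 2); [exact Hc|lra]).
    assert (Hr : bo 1 (fun u => ((1+u) - mm u) / (mm u + (1+u)))).
    { apply (bo_mul 1 0 (fun u => (1+u) - mm u)); auto. apply (bo_ext _ _ (fun u => (-1) * (mm u - 1) + u)). intros; ring. apply bo_add. apply bo_scal; auto. apply bo_id. }
    pose proof (F1 F a _ HF A0 Hr) as E.
    apply (bo_ext _ _ (fun u => (mm u + (1+u))/2 * (F (((1+u) - mm u) / (mm u + (1+u))) - 1) + /2 * (mm u - 1))).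
    intros u; unfold H; field.
    apply bo_add. apply (bo_mul 0 2); auto. apply (bo_ext _ _ (fun u => /2 * ((mm u + (1+u) - 2) + 2))). intros; field.
    apply bo_scal. apply bo_add. apply lo_bo; auto. apply bo_const. apply bo_scal; auto.
Qed.

Lemma deriv2 A B : bo 2 (fun u => A u - (1 - u/2)) -> bo 2 (fun u => B u - (1 + u/2)) ->
  lo 0 (fun u => A u + B u - 2) /\ bo 1 (fun u => B u - A u) /\ bo 2 (fun u => (B u - A u)/(A u + B u) - u/2).
Proof.
  intros HA HB.
  assert (Hc2 : bo 2 (fun u => A u + B u - 2)).
  { apply (bo_ext _ _ (fun u => (A u - (1 - u/2)) + (B u - (1 + u/2)))). intros; ring. apply bo_add; auto. }
  assert (Hc : lo 0 (fun u => A u + B u - 2)) by (apply (bo_lo0 1); auto).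
  assert (Hd2 : bo 2 (fun u => B u - A u - u)).
  { apply (bo_ext _ _ (fun u => (B u - (1 + u/2)) - (A u - (1 - u/2)))). intros; field. apply bo_sub; auto. }
  split; auto. split.
  - apply (bo_ext _ _ (fun u => (B u - A u - u) + u)). intros; ring. apply bo_add. apply (bo_weak 2); [lia|auto]. apply bo_id.
  - assert (Hne : ev (fun u => A u + B u <> 0)) by (apply (ev_ne _ 2); [exact Hc|lra]).
    assert (Hi : bo 0 (fun u => / (A u + B u))) by (apply (bo_inv _ 2); [exact Hc|lra]).
    apply (bo_ev _ _ (fun u => ((B u - A u - u) - /2 * (u * (A u + B u - 2))) * / (A u + B u))).
    eapply ev_imp. apply Hne. intros u _ Hu. field. auto.
    apply (bo_mul 2 0); auto. apply bo_sub; auto. apply bo_scal. apply (bo_weak (1+2)). lia. apply bo_mul; auto. apply bo_id.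
Qed.

Lemma half_pow p : (/2)^(2 * S p) <= /4.
Proof.
  replace (2 * S p)%nat with (2 + 2*p)%nat by lia. rewrite pow_add.
  assert (0 <= (/2)^(2*p) <= 1).
  { split. apply pow_le; lra. replace 1 with (1^(2*p)) by apply pow1. apply pow_incr; lra. }
  replace ((/2)^2) with (/4) by (simpl; field). nra.
Qed.

Lemma part1 FK FM FN aK aM aN :
  EXPF FK aK -> EXPF FM aM -> EXPF FN aN -> aK 0%nat = 1 -> aM 0%nat = 1 -> aN 0%nat = 1 ->
  ev (fun u => FN u = H FK (H FN (1-u) (FM u)) (H FN (FM u) (1+u))) ->
  ev (fun u => FN u = H FM (H FN (1-u) (FK u)) (H FN (FK u) (1+u))) ->
  forall n, aK n = aM n.
Proof.
  intros HK HM HN K0 M0 N0 S1 S2.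
  assert (Hid : bo 1 (fun u => u)) by apply bo_id.
  pose proof (F1 FM aM _ HM M0 Hid) as Bm. pose proof (F1 FK aK _ HK K0 Hid) as Bk. cbv beta in Bm, Bk.
  intros n. induction n as [n IH] using (well_founded_induction lt_wf).
  destruct n as [|p]. rewrite K0, M0; auto.
  set (d := aK (S p) - aM (S p)).
  assert (T5 : lo (2 * S p) (fun u => FK u - FM u - d * u^(2 * S p))).
  { pose proof (EXPF_comp FK aK (S p) _ HK Hid) as E1. pose proof (EXPF_comp FM aM (S p) _ HM Hid) as E2.
    cbv beta in E1, E2.
    apply (lo_ext _ _ (fun u => (FK u - Sm aK (S p) u) - (FM u - Sm aM (S p) u))).
    intros u. pose proof (GD aK aM (S p) u IH). unfold d. lra. apply lo_sub; auto. }
  assert (Hmk : bo (2 * S p) (fun u => FM u - FK u)).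
  { apply (bo_ext _ _ (fun u => (-1) * (FK u - FM u - d * u^(2 * S p)) + (-d) * u^(2 * S p))). intros; ring.
    apply bo_add. apply bo_scal, lo_bo; auto. apply bo_scal, bo_upow. }
  destruct (STR FN aN FM HN N0 Bm) as [SA1 SB1]. destruct (STR FN aN FK HN N0 Bk) as [SA2 SB2].
  set (A1 := fun u => H FN (1-u) (FM u)). set (B1 := fun u => H FN (FM u) (1+u)).
  set (A2 := fun u => H FN (1-u) (FK u)). set (B2 := fun u => H FN (FK u) (1+u)).
  destruct (deriv2 A1 B1 SA1 SB1) as [C1 [D1 R1]]. destruct (deriv2 A2 B2 SA2 SB2) as [C2 [D2 R2]].
  assert (T1 := MD FK FM aK aM (S p) A1 B1 HK HM IH ltac:(lia) C1 R1).
  assert (Hm1 : bo 1 (fun u => FM u - 1)) by (apply (bo_weak 2); [lia|auto]).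
  assert (Hk1 : bo 1 (fun u => FK u - 1)) by (apply (bo_weak 2); [lia|auto]).
  assert (T3 : lo (2 * S p) (fun u => H FN (1-u) (FM u) - H FN (1-u) (FK u) - (((1-u) - (1-u)) + (FM u - FK u))/2)).
  { apply (DL FN aN (S p) (fun u => 1-u) FM (fun u => 1-u) FK HN N0).
    - apply bo_lo. apply (bo_ext _ _ (fun u => (FM u - 1) + (-1) * u)). intros; ring. apply bo_add; auto. apply bo_scal, bo_id.
    - apply bo_lo. apply (bo_ext _ _ (fun u => (FK u - 1) + (-1) * u)). intros; ring. apply bo_add; auto. apply bo_scal, bo_id.
    - apply (bo_ext _ _ (fun u => (FM u - 1) + u)). intros; ring. apply bo_add; auto.
    - apply (bo_ext _ _ (fun u => (FK u - 1) + u)). intros; ring. apply bo_add; auto.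
    - apply (bo_ext _ _ (fun _ => 0)). intros; ring. apply bo_zero.
    - auto. }
  assert (T4 : lo (2 * S p) (fun u => H FN (FM u) (1+u) - H FN (FK u) (1+u) - ((FM u - FK u) + ((1+u) - (1+u)))/2)).
  { apply (DL FN aN (S p) FM (fun u => 1+u) FK (fun u => 1+u) HN N0).
    - apply bo_lo. apply (bo_ext _ _ (fun u => (FM u - 1) + u)). intros; ring. apply bo_add; auto.
    - apply bo_lo. apply (bo_ext _ _ (fun u => (FK u - 1) + u)). intros; ring. apply bo_add; auto.
    - apply (bo_ext _ _ (fun u => (-1) * (FM u - 1) + u)). intros; ring. apply bo_add; auto. apply bo_scal; auto.
    - apply (bo_ext _ _ (fun u => (-1) * (FK u - 1) + u)). intros; ring. apply bo_add; auto. apply bo_scal; auto.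
    - auto.
    - apply (bo_ext _ _ (fun _ => 0)). intros; ring. apply bo_zero. }
  assert (HA : bo (2 * S p) (fun u => A1 u - A2 u)).
  { apply (bo_ext _ _ (fun u => (H FN (1-u) (FM u) - H FN (1-u) (FK u) - (((1-u) - (1-u)) + (FM u - FK u))/2) + /2 * (FM u - FK u))).
    intros; unfold A1, A2; field. apply bo_add. apply lo_bo; auto. apply bo_scal; auto. }
  assert (HB : bo (2 * S p) (fun u => B1 u - B2 u)).
  { apply (bo_ext _ _ (fun u => (H FN (FM u) (1+u) - H FN (FK u) (1+u) - ((FM u - FK u) + ((1+u) - (1+u)))/2) + /2 * (FM u - FK u))).
    intros; unfold B1, B2; field. apply bo_add. apply lo_bo; auto. apply bo_scal; auto. }
  assert (T2 := DL FM aM (S p) A1 B1 A2 B2 HM M0 C1 C2 D1 D2 HA HB).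
  assert (Z : d * ((/2)^(2 * S p) - /2) = 0).
  { apply (lo_coef (2 * S p)).
    apply (lo_ev _ _ (fun u => (-1) * (((H FK (A1 u) (B1 u) - H FM (A1 u) (B1 u) - d * (u/2)^(2 * S p))
        + (H FM (A1 u) (B1 u) - H FM (A2 u) (B2 u) - ((A1 u - A2 u) + (B1 u - B2 u))/2))
        + /2 * ((H FN (1-u) (FM u) - H FN (1-u) (FK u) - (((1-u) - (1-u)) + (FM u - FK u))/2)
               + (H FN (FM u) (1+u) - H FN (FK u) (1+u) - ((FM u - FK u) + ((1+u) - (1+u)))/2))
        + (-/2) * (FK u - FM u - d * u^(2 * S p))))).
    - eapply ev_imp. apply ev_and. apply S1. apply S2. intros u _ [E1 E2].
      assert (EQ : H FK (A1 u) (B1 u) = H FM (A2 u) (B2 u)) by (unfold A1, B1, A2, B2; congruence).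
      unfold Rdiv at 1. rewrite Rpow_mult_distr. fold A1 B1 A2 B2. unfold A1 at 3 4, A2 at 2, B1 at 3 4, B2 at 2.
      fold (A1 u) (A2 u) (B1 u) (B2 u). rewrite EQ. field.
    - apply lo_scal. apply lo_add. apply lo_add. apply lo_add; auto. apply lo_scal, lo_add; auto. apply lo_scal; auto. }
  pose proof (half_pow p) as Hhp.
  assert (Hd0 : d = 0). { destruct (Rmult_integral _ _ Z); auto. lra. }
  unfold d in Hd0. lra.
Qed.

Fixpoint pev (p : list R) (u : R) : R := match p with nil => 0 | a :: q => a + u * pev q u end.
Fixpoint padd (p q : list R) : list R :=
  match p, q with nil, _ => q | _, nil => p | a :: p', b :: q' => (a + b) :: padd p' q' end.
Definition pscal (c : R) (p : list R) := map (fun x => c * x) p.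
Fixpoint pmul (p q : list R) : list R :=
  match p with nil => nil | a :: p' => padd (pscal a q) (0 :: pmul p' q) end.
Definition approx k f p := lo k (fun u => f u - pev p u).

Lemma pev_padd p q u : pev (padd p q) u = pev p u + pev q u.
Proof. revert q. induction p; intros q; destruct q; simpl; try ring. rewrite IHp. ring. Qed.
Lemma pev_pscal c p u : pev (pscal c p) u = c * pev p u.
Proof. unfold pscal. induction p; simpl; [ring|]. rewrite IHp. ring. Qed.
Lemma pev_pmul p q u : pev (pmul p q) u = pev p u * pev q u.
Proof. induction p; simpl; [ring|]. rewrite pev_padd, pev_pscal. simpl. rewrite IHp. ring. Qed.
Lemma pev_split n p u : pev p u = pev (firstn n p) u + u^n * pev (skipn n p) u.
Proof. revert p. induction n; intros p; simpl. ring. destruct p; simpl. ring. rewrite IHn. ring. Qed.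

Lemma bo_pev p : bo 0 (pev p).
Proof.
  induction p; simpl. apply bo_zero.
  apply (bo_ext _ _ (fun u => a + u * pev p u)). intros; auto.
  apply bo_add. apply bo_const. apply (bo_weak (1+0)). lia. apply bo_mul; auto. apply bo_id.
Qed.

Lemma bo_trunc k p : bo (S k) (fun u => pev p u - pev (firstn (S k) p) u).
Proof.
  apply (bo_ext _ _ (fun u => u^(S k) * pev (skipn (S k) p) u)). intros u. rewrite (pev_split (S k) p u) at 1. ring.
  apply (bo_weak (S k + 0)). lia. apply bo_mul. apply bo_upow. apply bo_pev.
Qed.

Lemma ap_pe k f p q : approx k f p -> (forall u, pev p u = pev q u) -> approx k f q.
Proof. intros H E. unfold approx. apply (lo_ext _ _ (fun u => f u - pev p u)); auto. intros; rewrite E; auto. Qed.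

Lemma ap_ev k f g p : ev (fun u => f u = g u) -> approx k g p -> approx k f p.
Proof. intros E H. unfold approx. apply (lo_ev _ _ (fun u => g u - pev p u)); auto. eapply ev_imp; eauto. intros u _ Hu; rewrite Hu; auto. Qed.

Lemma ap_ext k f g p : (forall u, f u = g u) -> approx k g p -> approx k f p.
Proof. intros E. apply ap_ev. exists 1; split; [lra|]. auto. Qed.

Lemma ap_bo k f p : approx k f p -> bo 0 f.
Proof. intros H. apply (bo_ext _ _ (fun u => (f u - pev p u) + pev p u)). intros; ring.
  apply bo_add. apply (bo_weak k). lia. apply lo_bo; auto. apply bo_pev. Qed.

Lemma ap_add k f g p q : approx k f p -> approx k g q -> approx k (fun u => f u + g u) (padd p q).
Proof. intros Hf Hg. unfold approx. apply (lo_ext _ _ (fun u => (f u - pev p u) + (g u - pev q u))).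
  intros; rewrite pev_padd; ring. apply lo_add; auto. Qed.

Lemma ap_scal k c f p : approx k f p -> approx k (fun u => c * f u) (pscal c p).
Proof. intros Hf. unfold approx. apply (lo_ext _ _ (fun u => c * (f u - pev p u))).
  intros; rewrite pev_pscal; ring. apply lo_scal; auto. Qed.

Lemma ap_const k c : approx k (fun _ => c) [c].
Proof. unfold approx. apply (lo_ext _ _ (fun _ => 0)). intros; simpl; ring. apply lo_zero. Qed.
Lemma ap_id k : approx k (fun u => u) [0; 1].
Proof. unfold approx. apply (lo_ext _ _ (fun _ => 0)). intros; simpl; ring. apply lo_zero. Qed.
Lemma ap_pev k p : approx k (pev p) p.
Proof. unfold approx. apply (lo_ext _ _ (fun _ => 0)). intros; simpl; ring. apply lo_zero. Qed.

Lemma ap_mul k f g p q : approx k f p -> approx k g q -> approx k (fun u => f u * g u) (firstn (S k) (pmul p q)).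
Proof.
  intros Hf Hg. unfold approx.
  apply (lo_ext _ _ (fun u => (f u - pev p u) * g u + pev p u * (g u - pev q u) + (pev (pmul p q) u - pev (firstn (S k) (pmul p q)) u))).
  intros; rewrite pev_pmul; ring.
  apply lo_add. apply lo_add.
  - replace k with (k+0)%nat at 1 by lia. apply lo_mul; auto. eapply ap_bo; eauto.
  - replace k with (0+k)%nat at 1 by lia. apply lo_mul'; auto. apply bo_pev.
  - apply bo_lo. apply bo_trunc.
Qed.

Lemma ap_to k f a p : approx k f (a :: p) -> lo 0 (fun u => f u - a).
Proof.
  intros H. apply (lo_ext _ _ (fun u => (f u - pev (a :: p) u) + u * pev p u)). intros; simpl; ring.
  apply lo_add. apply (lo_weak k). lia. auto. apply (bo_lo0 0). apply (bo_mul 1 0). apply bo_id. apply bo_pev.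
Qed.

Lemma ap_inv k f a p q : approx k f (a :: p) -> a <> 0 ->
  (forall u, pev (firstn (S k) (pmul (a :: p) q)) u = 1) -> approx k (fun u => / f u) q.
Proof.
  intros Hf Ha Hq. pose proof (ap_to _ _ _ _ Hf) as Ht.
  pose proof (ap_mul k _ _ _ _ Hf (ap_pev k q)) as Hm. unfold approx in Hm.
  unfold approx. apply (lo_ev _ _ (fun u => (-1) * (f u * pev q u - pev (firstn (S k) (pmul (a :: p) q)) u) * / f u)).
  eapply ev_imp. apply (ev_ne _ a Ht Ha). intros u _ Hu. rewrite Hq. field; auto.
  replace k with (k+0)%nat at 1 by lia. apply lo_mul. apply lo_scal; auto. apply (bo_inv _ a); auto.
Qed.

Lemma lo_div k g : lo (S k) (fun u => u * g u) -> lo k g.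
Proof.
  intros H eps He. eapply ev_imp. apply (H eps He). intros u Hu Hb. simpl in Hb.
  rewrite Rabs_mult, (Rabs_right u) in Hb by lra.
  apply Rmult_le_reg_l with u; auto. nra.
Qed.

Lemma lo_poly p k : (length p <= S k)%nat -> lo k (pev p) -> Forall (fun c => c = 0) p.
Proof.
  revert k. induction p as [|a q IH]; intros k Hl H. constructor.
  assert (Ha : a = 0).
  { apply (lo_coef 0). apply (lo_ext _ _ (fun u => pev (a :: q) u + (-1) * (u * pev q u))). intros; simpl; ring.
    apply lo_add. apply (lo_weak k). lia. auto. apply lo_scal. apply (bo_lo0 0). apply (bo_mul 1 0). apply bo_id. apply bo_pev. }
  constructor; auto. destruct k.
  - simpl in Hl. destruct q; [constructor|simpl in Hl; lia].
  - apply (IH k). simpl in Hl; lia. apply lo_div. apply (lo_ext _ _ (pev (a :: q))). intros; simpl; rewrite Ha; ring. auto.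
Qed.

Lemma ap_F F a r rho : EXPF F a -> a 0%nat = 1 -> approx 4 r (0 :: rho) ->
  approx 4 (fun u => F (r u)) (padd [1] (padd (pscal (a 1%nat) (firstn 5 (pmul (0::rho) (0::rho))))
     (pscal (a 2%nat) (firstn 5 (pmul (firstn 5 (pmul (0::rho) (0::rho))) (firstn 5 (pmul (0::rho) (0::rho)))))))).
Proof.
  intros HF A0 Hr.
  assert (Br : bo 1 r).
  { apply (bo_ext _ _ (fun u => (r u - pev (0 :: rho) u) + u * pev rho u)). intros; simpl; ring.
    apply bo_add. apply (bo_weak 4). lia. apply lo_bo; auto. apply (bo_mul 1 0). apply bo_id. apply bo_pev. }
  pose proof (EXPF_comp F a 2 r HF Br) as E.
  pose proof (ap_mul 4 _ _ _ _ Hr Hr) as R2. pose proof (ap_mul 4 _ _ _ _ R2 R2) as R4.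
  pose proof (ap_add 4 _ _ _ _ (ap_const 4 1) (ap_add 4 _ _ _ _ (ap_scal 4 (a 1%nat) _ _ R2) (ap_scal 4 (a 2%nat) _ _ R4))) as P.
  unfold approx in *. apply (lo_ext _ _ (fun u => (F (r u) - Sm a 2 (r u)) + ((1 + (a 1%nat * (r u * r u) + a 2%nat * (r u * r u * (r u * r u)))) - pev (padd [1] (padd (pscal (a 1%nat) (firstn 5 (pmul (0::rho) (0::rho))))
     (pscal (a 2%nat) (firstn 5 (pmul (firstn 5 (pmul (0::rho) (0::rho))) (firstn 5 (pmul (0::rho) (0::rho)))))))) u))).
  intros u. unfold Sm. simpl sum_f_R0. rewrite A0. simpl. ring.
  apply lo_add; auto.
Qed.

Lemma ap_base F a : EXPF F a -> a 0%nat = 1 -> approx 4 F [1; 0; a 1%nat; 0; a 2%nat].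
Proof.
  intros HF A0. pose proof (EXPF_comp F a 2 (fun u => u) HF bo_id) as E. unfold approx.
  apply (lo_ext _ _ (fun u => F u - Sm a 2 u)). intros u. unfold Sm. simpl sum_f_R0. rewrite A0. simpl. ring. auto.
Qed.

Lemma order4 FK FM FN aK aM aN : EXPF FK aK -> EXPF FM aM -> EXPF FN aN ->
  aK 0%nat = 1 -> aM 0%nat = 1 -> aN 0%nat = 1 ->
  ev (fun u => FN u = H FK (H FN (1-u) (FM u)) (H FN (FM u) (1+u))) ->
  ((1/4) * (aK 1%nat) + (1/2) * (aM 1%nat) + (-3/4) * (aN 1%nat)) = 0 /\ ((-1/8) * (aK 1%nat) * (aM 1%nat) + (-1/2) * (aK 1%nat) * (aM 1%nat) * (aN 1%nat) + (-3/16) * (aK 1%nat) * (aN 1%nat) + (1/16) * (aK 2%nat) + (1/8) * (aM 1%nat) * (aN 1%nat) + (1/4) * (aM 1%nat) * (aM 1%nat) * (aN 1%nat) + (1/2) * (aM 2%nat) + (1/16) * (aN 1%nat) + (-15/16) * (aN 2%nat)) = 0.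
Proof.
  intros HK HM HN K0 M0 N0 S1.
  assert (Hs1 : approx 4 (fun u => 1 - u) [1; -1]).
  { apply (ap_ext 4 _ (fun u => 1 + (-1) * u)). intros; ring.
    eapply ap_pe. apply (ap_add 4 _ _ _ _ (ap_const 4 1) (ap_scal 4 (-1) _ _ (ap_id 4))). intros u; cbn [pev padd pscal pmul firstn map]; field. }
  assert (Ht2 : approx 4 (fun u => 1 + u) [1; 1]).
  { eapply ap_pe. apply (ap_add 4 _ _ _ _ (ap_const 4 1) (ap_id 4)). intros u; cbn [pev padd pscal pmul firstn map]; field. }
  pose proof (ap_base FM aM HM M0) as HmA.
  pose proof (ap_base FN aN HN N0) as HnA.
  assert (Xsum1 : approx 4 (fun u => (1-u) + FM u) [((2)); ((-1)); ((1) * (aM 1%nat)); 0; ((1) * (aM 2%nat))]).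
  { eapply ap_pe. apply (ap_add 4 _ _ _ _ Hs1 HmA). intros u; cbn [pev padd pscal pmul firstn map]; field. }
  assert (Xinv1 : approx 4 (fun u => / ((1-u) + FM u)) [((1/2)); ((1/4)); ((1/8) + (-1/4) * (aM 1%nat)); ((1/16) + (-1/4) * (aM 1%nat)); ((1/32) + (-3/16) * (aM 1%nat) + (1/8) * (aM 1%nat) * (aM 1%nat) + (-1/4) * (aM 2%nat))]).
  { eapply ap_inv. apply Xsum1. lra. intros u; cbn [pev padd pscal pmul firstn map]; field. }
  assert (Xdif1 : approx 4 (fun u => FM u - (1-u)) [0; ((1)); ((1) * (aM 1%nat)); 0; ((1) * (aM 2%nat))]).
  { apply (ap_ext 4 _ (fun u => FM u + (-1) * (1 - u))). intros; ring. eapply ap_pe. apply (ap_add 4 _ _ _ _ HmA (ap_scal 4 (-1) _ _ Hs1)). intros u; cbn [pev padd pscal pmul firstn map]; field. }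
  assert (Xr1 : approx 4 (fun u => (FM u - (1-u)) * / ((1-u) + FM u)) [0; ((1/2)); ((1/4) + (1/2) * (aM 1%nat)); ((1/8)); ((1/16) + (-1/8) * (aM 1%nat) + (-1/4) * (aM 1%nat) * (aM 1%nat) + (1/2) * (aM 2%nat))]).
  { eapply ap_pe. apply (ap_mul 4 _ _ _ _ Xdif1 Xinv1). intros u; cbn [pev padd pscal pmul firstn map]; field. }
  assert (XF1 : approx 4 (fun u => FN ((FM u - (1-u)) * / ((1-u) + FM u))) [((1)); 0; ((1/4) * (aN 1%nat)); ((1/2) * (aM 1%nat) * (aN 1%nat) + (1/4) * (aN 1%nat)); ((1/4) * (aM 1%nat) * (aN 1%nat) + (1/4) * (aM 1%nat) * (aM 1%nat) * (aN 1%nat) + (3/16) * (aN 1%nat) + (1/16) * (aN 2%nat))]).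
  { eapply ap_pe. apply (ap_F FN aN _ _ HN N0 Xr1). intros u; cbn [pev padd pscal pmul firstn map]; field. }
  assert (XA : approx 4 (fun u => H FN (1-u) (FM u)) [((1)); ((-1/2)); ((1/2) * (aM 1%nat) + (1/4) * (aN 1%nat)); ((1/2) * (aM 1%nat) * (aN 1%nat) + (1/8) * (aN 1%nat)); ((1/8) * (aM 1%nat) * (aN 1%nat) + (1/4) * (aM 1%nat) * (aM 1%nat) * (aN 1%nat) + (1/2) * (aM 2%nat) + (1/16) * (aN 1%nat) + (1/16) * (aN 2%nat))]).
  { apply (ap_ext 4 _ (fun u => (/2 * ((1-u) + FM u)) * FN ((FM u - (1-u)) * / ((1-u) + FM u)))). intros; unfold H, Rdiv; ring. eapply ap_pe. apply (ap_mul 4 _ _ _ _ (ap_scal 4 (/2) _ _ Xsum1) XF1). intros u; cbn [pev padd pscal pmul firstn map]; field. }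
  assert (Xsum2 : approx 4 (fun u => FM u + (1+u)) [((2)); ((1)); ((1) * (aM 1%nat)); 0; ((1) * (aM 2%nat))]).
  { eapply ap_pe. apply (ap_add 4 _ _ _ _ HmA Ht2). intros u; cbn [pev padd pscal pmul firstn map]; field. }
  assert (Xinv2 : approx 4 (fun u => / (FM u + (1+u))) [((1/2)); ((-1/4)); ((1/8) + (-1/4) * (aM 1%nat)); ((-1/16) + (1/4) * (aM 1%nat)); ((1/32) + (-3/16) * (aM 1%nat) + (1/8) * (aM 1%nat) * (aM 1%nat) + (-1/4) * (aM 2%nat))]).
  { eapply ap_inv. apply Xsum2. lra. intros u; cbn [pev padd pscal pmul firstn map]; field. }
  assert (Xdif2 : approx 4 (fun u => (1+u) - FM u) [0; ((1)); ((-1) * (aM 1%nat)); 0; ((-1) * (aM 2%nat))]).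
  { apply (ap_ext 4 _ (fun u => (1+u) + (-1) * FM u)). intros; ring. eapply ap_pe. apply (ap_add 4 _ _ _ _ Ht2 (ap_scal 4 (-1) _ _ HmA)). intros u; cbn [pev padd pscal pmul firstn map]; field. }
  assert (Xr2 : approx 4 (fun u => ((1+u) - FM u) * / (FM u + (1+u))) [0; ((1/2)); ((-1/4) + (-1/2) * (aM 1%nat)); ((1/8)); ((-1/16) + (1/8) * (aM 1%nat) + (1/4) * (aM 1%nat) * (aM 1%nat) + (-1/2) * (aM 2%nat))]).
  { eapply ap_pe. apply (ap_mul 4 _ _ _ _ Xdif2 Xinv2). intros u; cbn [pev padd pscal pmul firstn map]; field. }
  assert (XF2 : approx 4 (fun u => FN (((1+u) - FM u) * / (FM u + (1+u)))) [((1)); 0; ((1/4) * (aN 1%nat)); ((-1/2) * (aM 1%nat) * (aN 1%nat) + (-1/4) * (aN 1%nat)); ((1/4) * (aM 1%nat) * (aN 1%nat) + (1/4) * (aM 1%nat) * (aM 1%nat) * (aN 1%nat) + (3/16) * (aN 1%nat) + (1/16) * (aN 2%nat))]).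
  { eapply ap_pe. apply (ap_F FN aN _ _ HN N0 Xr2). intros u; cbn [pev padd pscal pmul firstn map]; field. }
  assert (XB : approx 4 (fun u => H FN (FM u) (1+u)) [((1)); ((1/2)); ((1/2) * (aM 1%nat) + (1/4) * (aN 1%nat)); ((-1/2) * (aM 1%nat) * (aN 1%nat) + (-1/8) * (aN 1%nat)); ((1/8) * (aM 1%nat) * (aN 1%nat) + (1/4) * (aM 1%nat) * (aM 1%nat) * (aN 1%nat) + (1/2) * (aM 2%nat) + (1/16) * (aN 1%nat) + (1/16) * (aN 2%nat))]).
  { apply (ap_ext 4 _ (fun u => (/2 * (FM u + (1+u))) * FN (((1+u) - FM u) * / (FM u + (1+u))))). intros; unfold H, Rdiv; ring. eapply ap_pe. apply (ap_mul 4 _ _ _ _ (ap_scal 4 (/2) _ _ Xsum2) XF2). intros u; cbn [pev padd pscal pmul firstn map]; field. }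
  assert (XsumK : approx 4 (fun u => H FN (1-u) (FM u) + H FN (FM u) (1+u)) [((2)); 0; ((1) * (aM 1%nat) + (1/2) * (aN 1%nat)); 0; ((1/4) * (aM 1%nat) * (aN 1%nat) + (1/2) * (aM 1%nat) * (aM 1%nat) * (aN 1%nat) + (1) * (aM 2%nat) + (1/8) * (aN 1%nat) + (1/8) * (aN 2%nat))]).
  { eapply ap_pe. apply (ap_add 4 _ _ _ _ XA XB). intros u; cbn [pev padd pscal pmul firstn map]; field. }
  assert (XinvK : approx 4 (fun u => / (H FN (1-u) (FM u) + H FN (FM u) (1+u))) [((1/2)); 0; ((-1/4) * (aM 1%nat) + (-1/8) * (aN 1%nat)); 0; ((1/16) * (aM 1%nat) * (aN 1%nat) + (1/8) * (aM 1%nat) * (aM 1%nat) + (-1/8) * (aM 1%nat) * (aM 1%nat) * (aN 1%nat) + (-1/4) * (aM 2%nat) + (-1/32) * (aN 1%nat) + (1/32) * (aN 1%nat) * (aN 1%nat) + (-1/32) * (aN 2%nat))]).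
  { eapply ap_inv. apply XsumK. lra. intros u; cbn [pev padd pscal pmul firstn map]; field. }
  assert (XdifK : approx 4 (fun u => H FN (FM u) (1+u) - H FN (1-u) (FM u)) [0; ((1)); 0; ((-1) * (aM 1%nat) * (aN 1%nat) + (-1/4) * (aN 1%nat)); 0]).
  { apply (ap_ext 4 _ (fun u => H FN (FM u) (1+u) + (-1) * H FN (1-u) (FM u))). intros; ring. eapply ap_pe. apply (ap_add 4 _ _ _ _ XB (ap_scal 4 (-1) _ _ XA)). intros u; cbn [pev padd pscal pmul firstn map]; field. }
  assert (XrK : approx 4 (fun u => (H FN (FM u) (1+u) - H FN (1-u) (FM u)) * / (H FN (1-u) (FM u) + H FN (FM u) (1+u))) [0; ((1/2)); 0; ((-1/4) * (aM 1%nat) + (-1/2) * (aM 1%nat) * (aN 1%nat) + (-1/4) * (aN 1%nat)); 0]).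
  { eapply ap_pe. apply (ap_mul 4 _ _ _ _ XdifK XinvK). intros u; cbn [pev padd pscal pmul firstn map]; field. }
  assert (XFK : approx 4 (fun u => FK ((H FN (FM u) (1+u) - H FN (1-u) (FM u)) * / (H FN (1-u) (FM u) + H FN (FM u) (1+u)))) [((1)); 0; ((1/4) * (aK 1%nat)); 0; ((-1/4) * (aK 1%nat) * (aM 1%nat) + (-1/2) * (aK 1%nat) * (aM 1%nat) * (aN 1%nat) + (-1/4) * (aK 1%nat) * (aN 1%nat) + (1/16) * (aK 2%nat))]).
  { eapply ap_pe. apply (ap_F FK aK _ _ HK K0 XrK). intros u; cbn [pev padd pscal pmul firstn map]; field. }
  assert (XR : approx 4 (fun u => H FK (H FN (1-u) (FM u)) (H FN (FM u) (1+u))) [((1)); 0; ((1/4) * (aK 1%nat) + (1/2) * (aM 1%nat) + (1/4) * (aN 1%nat)); 0; ((-1/8) * (aK 1%nat) * (aM 1%nat) + (-1/2) * (aK 1%nat) * (aM 1%nat) * (aN 1%nat) + (-3/16) * (aK 1%nat) * (aN 1%nat) + (1/16) * (aK 2%nat) + (1/8) * (aM 1%nat) * (aN 1%nat) + (1/4) * (aM 1%nat) * (aM 1%nat) * (aN 1%nat) + (1/2) * (aM 2%nat) + (1/16) * (aN 1%nat) + (1/16) * (aN 2%nat))]).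
  { apply (ap_ext 4 _ (fun u => (/2 * (H FN (1-u) (FM u) + H FN (FM u) (1+u))) * FK ((H FN (FM u) (1+u) - H FN (1-u) (FM u)) * / (H FN (1-u) (FM u) + H FN (FM u) (1+u))))). intros; unfold H at 1; unfold Rdiv; ring. eapply ap_pe. apply (ap_mul 4 _ _ _ _ (ap_scal 4 (/2) _ _ XsumK) XFK). intros u; cbn [pev padd pscal pmul firstn map]; field. }
  assert (XN2 : approx 4 FN [((1)); 0; ((1/4) * (aK 1%nat) + (1/2) * (aM 1%nat) + (1/4) * (aN 1%nat)); 0; ((-1/8) * (aK 1%nat) * (aM 1%nat) + (-1/2) * (aK 1%nat) * (aM 1%nat) * (aN 1%nat) + (-3/16) * (aK 1%nat) * (aN 1%nat) + (1/16) * (aK 2%nat) + (1/8) * (aM 1%nat) * (aN 1%nat) + (1/4) * (aM 1%nat) * (aM 1%nat) * (aN 1%nat) + (1/2) * (aM 2%nat) + (1/16) * (aN 1%nat) + (1/16) * (aN 2%nat))]) by (eapply ap_ev; [exact S1| exact XR]).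
  assert (LD : lo 4 (pev [0; 0; ((1/4) * (aK 1%nat) + (1/2) * (aM 1%nat) + (-3/4) * (aN 1%nat)); 0; ((-1/8) * (aK 1%nat) * (aM 1%nat) + (-1/2) * (aK 1%nat) * (aM 1%nat) * (aN 1%nat) + (-3/16) * (aK 1%nat) * (aN 1%nat) + (1/16) * (aK 2%nat) + (1/8) * (aM 1%nat) * (aN 1%nat) + (1/4) * (aM 1%nat) * (aM 1%nat) * (aN 1%nat) + (1/2) * (aM 2%nat) + (1/16) * (aN 1%nat) + (-15/16) * (aN 2%nat))])).
  { unfold approx in XN2, HnA. apply (lo_ext _ _ (fun u => (FN u - pev [1; 0; aN 1%nat; 0; aN 2%nat] u) - (FN u - pev [((1)); 0; ((1/4) * (aK 1%nat) + (1/2) * (aM 1%nat) + (1/4) * (aN 1%nat)); 0; ((-1/8) * (aK 1%nat) * (aM 1%nat) + (-1/2) * (aK 1%nat) * (aM 1%nat) * (aN 1%nat) + (-3/16) * (aK 1%nat) * (aN 1%nat) + (1/16) * (aK 2%nat) + (1/8) * (aM 1%nat) * (aN 1%nat) + (1/4) * (aM 1%nat) * (aM 1%nat) * (aN 1%nat) + (1/2) * (aM 2%nat) + (1/16) * (aN 1%nat) + (1/16) * (aN 2%nat))] u))).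
    intros u; cbn [pev padd pscal pmul firstn map]; field. apply lo_sub; auto. }
  apply lo_poly in LD; [|simpl; lia].
  inversion LD as [|? ? E0 LD1]. inversion LD1 as [|? ? E1 LD2]. inversion LD2 as [|? ? E2 LD3].
  inversion LD3 as [|? ? E3 LD4]. inversion LD4 as [|? ? E4 LD5]. split; auto.
Qed.
Theorem mainTheorem9 (K M N : R -> R -> R) (aK aM aN : nat -> R) :
  is_mean K -> symmetric K -> homogeneous K -> stable K ->
  is_mean M -> symmetric M -> homogeneous M -> stable M ->
  is_mean N -> symmetric N -> homogeneous N ->
  has_sym_asymp_exp K aK -> has_sym_asymp_exp M aM -> has_sym_asymp_exp N aN ->
  stabilizable K M N -> stabilizable M K N ->
  (forall n : nat, aK n = aM n) /\
  aN 1%nat = aM 1%nat /\ aM 1%nat = aK 1%nat /\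
  aN 2%nat = 1 / 6 * aN 1%nat * (1 + aN 1%nat) * (1 - 4 * aN 1%nat).
Proof.
  intros mK sK hK stK mM sM hM stM mN sN hN eK eM eN st1 st2.
  pose proof (EXPF_of K aK mK sK hK eK) as XK.
  pose proof (EXPF_of M aM mM sM hM eM) as XM.
  pose proof (EXPF_of N aN mN sN hN eN) as XN.
  pose proof (a0_one K aK mK eK) as K0. pose proof (a0_one M aM mM eM) as M0. pose proof (a0_one N aN mN eN) as N0.
  assert (S1 : ev (fun u => FP N u = H (FP K) (H (FP N) (1-u) (FP M u)) (H (FP N) (FP M u) (1+u)))).
  { exists 1; split; [lra|]. intros u Hu. apply stab_of; auto. }
  assert (S2 : ev (fun u => FP N u = H (FP M) (H (FP N) (1-u) (FP K u)) (H (FP N) (FP K u) (1+u)))).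
  { exists 1; split; [lra|]. intros u Hu. apply stab_of; auto. }
  assert (stM' : stabilizable M M M) by exact stM.
  assert (S3 : ev (fun u => FP M u = H (FP M) (H (FP M) (1-u) (FP M u)) (H (FP M) (FP M u) (1+u)))).
  { exists 1; split; [lra|]. intros u Hu. apply stab_of; auto. }
  pose proof (part1 (FP K) (FP M) (FP N) aK aM aN XK XM XN K0 M0 N0 S1 S2) as P1.
  destruct (order4 (FP K) (FP M) (FP N) aK aM aN XK XM XN K0 M0 N0 S1) as [E2 E4].
  destruct (order4 (FP M) (FP M) (FP M) aM aM aM XM XM XM M0 M0 M0 S3) as [F2 F4].
  pose proof (P1 1%nat) as Q1. pose proof (P1 2%nat) as Q2.
  rewrite Q1 in E2. rewrite Q1, Q2 in E4.
  assert (Hn1 : aN 1%nat = aM 1%nat) by lra.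
  rewrite Hn1 in E4.
  split; auto. split; auto. split; auto.
  rewrite Hn1. nra.
Qed.
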